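(* Let $c\in\mathbb{R}$ with $c>0$ and $h:\mathbb{N}\to(0,\infty]$ with $0<h(n)<\infty$ for all $n\in\mathbb{N}$. Consider the recurrence $$T(1)=c,\qquad T(n)=T(n-1)+h(n)\ \text{ for } n\ge2.$$ Then it has a unique solution $f_T\in\mathcal{RT}_c$. Moreover, if there exists $g\in\mathcal{RT}_c$ such that $\Gamma_T$ is an improver with respect to $g$, then $f_T\in\mathcal{O}(g)$.
   Context: $\mathbb{N}$ is the set of positive integers, $\omega$ the nonnegative integers. $\mathcal{RT}$ is the set of functions $\mathbb{N}\to(0,\infty]$ and $\mathcal{RT}_c=\{f\in\mathcal{RT}: f(1)=c\}$. $\Gamma_T:\mathcal{RT}_c\to\mathcal{RT}_c$ is defined by $\Gamma_T(f)(1)=c$ and $\Gamma_T(f)(n)=f(n-1)+h(n)$ for $n\ge2$. A functional $\Phi:C\to C$ ($C\subseteq\mathcal{RT}$) is an improver with respect to $f\in C$ if $\Phi^{n+1}(f)\le\Phi^n(f)$ pointwise for all $n\in\omega$ (with $\Phi^0(f)=f$). $f\in\mathcal{O}(g)$ means there exist $n_0\in\mathbb{N}$ and $C\ge0$ with $f(n)\le Cg(n)$ for all $n\ge n_0$. *)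

(* Defs.v *)
From Stdlib Require Import Reals Lra Lia.
From Coquelicot Require Import Coquelicot.
Open Scope R_scope.

(* Functions N -> (0, +oo] are modelled as nat -> Rbar; only arguments n >= 1
   matter (value at 0 is ignored everywhere). *)
Definition inRT (f : nat -> Rbar) : Prop :=
  forall n : nat, (1 <= n)%nat -> Rbar_lt (Finite 0) (f n).

Definition inRTc (c : R) (f : nat -> Rbar) : Prop :=
  inRT f /\ f 1%nat = Finite c.

Definition GammaT (c : R) (h : nat -> Rbar) (f : nat -> Rbar) : nat -> Rbar :=
  fun n => if (n <=? 1)%nat then Finite c else Rbar_plus (f (n - 1)%nat) (h n).

Definition solves_rec (c : R) (h : nat -> Rbar) (f : nat -> Rbar) : Prop :=
  f 1%nat = Finite c /\
  forall n : nat, (2 <= n)%nat -> f n = Rbar_plus (f (n - 1)%nat) (h n).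

Definition RT_le (f g : nat -> Rbar) : Prop :=
  forall n : nat, (1 <= n)%nat -> Rbar_le (f n) (g n).

Definition improver (Phi : (nat -> Rbar) -> (nat -> Rbar)) (f : nat -> Rbar) : Prop :=
  forall k : nat, RT_le (Nat.iter (S k) Phi f) (Nat.iter k Phi f).

Definition bigO (f g : nat -> Rbar) : Prop :=
  exists (n0 : nat) (C : R), (1 <= n0)%nat /\ 0 <= C /\
    forall n : nat, (n0 <= n)%nat -> Rbar_le (f n) (Rbar_mult (Finite C) (g n)).

(* Main.v *)
Require Import Defs.
From Stdlib Require Import Reals Lra Lia.
From Coquelicot Require Import Coquelicot.
Open Scope R_scope.

Fixpoint FF (c : R) (h : nat -> Rbar) (n : nat) : R :=
  match n with
  | O => c
  | S O => c
  | S (S m as k) => FF c h k + real (h (S k))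
  end.

Lemma hfin (h : nat -> Rbar) n :
  Rbar_lt (Finite 0) (h n) /\ Rbar_lt (h n) p_infty ->
  h n = Finite (real (h n)) /\ 0 < real (h n).
Proof. intros [H1 H2]. destruct (h n); simpl in *; try tauto; split; auto. Qed.

Lemma FF_step c h n : (2 <= n)%nat -> FF c h n = FF c h (n - 1) + real (h n).
Proof.
  intros Hn. destruct n as [|[|m]]; try lia. simpl. replace (m - 0)%nat with m by lia.
  reflexivity.
Qed.

Theorem corollary12 (c : R) (h : nat -> Rbar) :
  0 < c ->
  (forall n : nat, (1 <= n)%nat ->
     Rbar_lt (Finite 0) (h n) /\ Rbar_lt (h n) p_infty) ->
  exists fT : nat -> Rbar,
    inRTc c fT /\ solves_rec c h fT /\
    (forall f : nat -> Rbar, inRTc c f -> solves_rec c h f ->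
       forall n : nat, (1 <= n)%nat -> f n = fT n) /\
    (forall g : nat -> Rbar, inRTc c g -> improver (GammaT c h) g -> bigO fT g).
Proof.
  intros Hc Hh.
  assert (Hge : forall n, c <= FF c h n).
  { induction n as [|[|m] IH]; simpl; try lra.
    destruct (hfin h (S (S m)) (Hh (S (S m)) ltac:(lia))). simpl in IH. lra. }
  assert (Hstep : forall n, (2 <= n)%nat ->
    Finite (FF c h n) = Rbar_plus (Finite (FF c h (n-1))) (h n)).
  { intros n Hn. destruct (hfin h n (Hh n ltac:(clear -Hn; lia))) as [E _]. rewrite E.
    simpl. rewrite FF_step by lia. reflexivity. }
  exists (fun n => Finite (FF c h n)).
  split; [split|split; [split|split]].
  - intros n _. simpl. specialize (Hge n). lra.
  - reflexivity.
  - reflexivity.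
  - intros n Hn. apply Hstep; auto.
  - intros f [_ Hf1] [_ Hfs] n Hn.
    induction n as [|n IH]; [lia|].
    destruct n as [|n]; [exact Hf1|].
    rewrite Hfs by lia. rewrite (Hstep (S (S n))) by lia.
    replace (S (S n) - 1)%nat with (S n) by lia.
    rewrite IH by lia.
    reflexivity.
  - intros g [_ Hg1] Himp.
    assert (Hle : forall k, RT_le (Nat.iter k (GammaT c h) g) g).
    { induction k as [|k IH]; intros n Hn. simpl. apply Rbar_le_refl.
      eapply Rbar_le_trans. apply Himp; auto. apply IH; auto. }
    assert (Heq : forall k n, (1 <= n <= S k)%nat ->
               Nat.iter k (GammaT c h) g n = Finite (FF c h n)).
    { induction k as [|k IH]; intros n Hn.
      - replace n with 1%nat by lia. simpl. exact Hg1.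
      - simpl. unfold GammaT at 1.
        destruct (Nat.leb_spec n 1).
        + replace n with 1%nat by lia. reflexivity.
        + rewrite IH by lia. rewrite (Hstep n) by lia. reflexivity. }
    exists 1%nat, 1. split; [lia|split; [lra|]].
    intros n Hn.
    assert (M : Rbar_mult (Finite 1) (g n) = g n).
    { destruct (g n); simpl; try (f_equal; ring);
      unfold Rbar_mult; simpl; destruct (Rle_dec 0 1); try lra;
      destruct (Rle_lt_or_eq_dec 0 1 r); try lra; reflexivity. }
    rewrite M. rewrite <- (Heq n n) by lia. apply Hle; auto.
Qed.
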